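(* Let $p$ be a prime and let $G$ be a finite $p$-group such that $Z(G)$ is not contained in $G'$ and $G$ has nilpotency class at least $3$. If $G$ has coclass $2$, then $G$ does not satisfy $Z(\mathrm{Inn}(G))=\mathrm{Aut}_c^{Z}(G)<\mathrm{Aut}_c(G)$ (i.e., it is not the case that $\mathrm{Aut}_c^{Z}(G)$ equals $Z(\mathrm{Inn}(G))$ and is a proper subgroup of $\mathrm{Aut}_c(G)$).
   Context: $G'$ is the commutator subgroup and $Z(G)$ the center of $G$. $\mathrm{Inn}(G)$ is the group of inner automorphisms of $G$. An automorphism $\alpha$ of $G$ is central if $x^{-1}\alpha(x)\in Z(G)$ for all $x\in G$ (equivalently, it commutes with all inner automorphisms); $\mathrm{Aut}_c(G)$ denotes the group of all central automorphisms of $G$, and $\mathrm{Aut}_c^{Z}(G)$ the subgroup of central automorphisms fixing every element of $Z(G)$. A group of order $p^n$ and nilpotency class $c$ has coclass $n-c$. *)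

(* Defs.v *)
From mathcomp Require Import all_boot all_fingroup all_solvable.
Set Implicit Arguments. Unset Strict Implicit. Unset Printing Implicit Defensive.
Local Open Scope group_scope.

(* Inn(G): the group of inner automorphisms x |-> x ^ g (g in G), as
   permutations of gT (identity outside G, like all elements of Aut G). *)
Definition Inn (gT : finGroupType) (G : {group gT}) : {set {perm gT}} :=
  conj_aut G @* G.

Definition Autc (gT : finGroupType) (G : {set gT}) : {set {perm gT}} :=
  [set a in Aut G | [forall x in G, x^-1 * a x \in 'Z(G)]].

Definition AutcZ (gT : finGroupType) (G : {set gT}) : {set {perm gT}} :=
  [set a in Autc G | [forall z in 'Z(G), a z == z]].

Definition coclass (p : nat) (gT : finGroupType) (G : {set gT}) : nat :=
  logn p #|G| - nil_class G.

(* Main.v *)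
Require Import Defs.
From mathcomp Require Import all_boot all_fingroup all_solvable zify.
Set Implicit Arguments. Unset Strict Implicit. Unset Printing Implicit Defensive.
Local Open Scope group_scope.

Lemma build_aut (p : nat) (gT : finGroupType) (G M : {group gT}) (z0 t : gT) :
  prime p -> M <| G -> #|G : M| = p -> 'Z(G) \subset M -> z0 \in 'Z(G) ->
  #[z0] = p -> t \in G -> t \notin M ->
  exists a, [/\ a \in AutcZ G, {in M, forall m, a m = m} & a t != t].
Proof.
move=> pr nMG iM sZM Zz0 oz0 tG tM.
have [sMG nMG'] := andP nMG.
set tb := coset M t.
have tbG : tb \in G / M by exact: mem_quotient.
have ntb : tb != 1.
  by apply: contra tM => /eqP; apply: coset_idr; apply: (subsetP nMG').
have cardGM : #|G / M| = p by rewrite card_quotient.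
have otb : #[tb] = p.
  apply/(prime_nt_dvdP pr); last by rewrite -cardGM order_dvdG.
  by rewrite -order_gt1 in ntb; rewrite neq_ltn ntb orbT.
have GMtb : G / M = <[tb]>.
  apply/eqP; rewrite eq_sym eqEcard cycle_subG tbG /= -orderE otb cardGM leqnn.
  by [].
have dvd : #[z0] %| #[tb] by rewrite oz0 otb.
pose f x := eltm dvd (coset M x).
have fM : {in G &, {morph f : x y / x * y}}.
  move=> x y xG yG; rewrite /f morphM ?(subsetP nMG') //.
  rewrite morphM //= -GMtb mem_quotient //.
have fZ : forall x, x \in G -> f x \in 'Z(G).
  move=> x xG; rewrite /f; have : coset M x \in <[tb]> by rewrite -GMtb mem_quotient.
  by case/cycleP=> i ->; rewrite eltmE groupX.
have f1 : {in M, forall m, f m = 1}.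
  by move=> m mM; rewrite /f coset_id // morph1.
have ft : f t = z0 by rewrite /f eltm_id.
pose phi x := x * f x.
have phiM : morphic G phi.
  apply/morphicP=> x y xG yG; rewrite /phi fM // !mulgA; congr (_ * _).
  rewrite -!mulgA; congr (_ * _); apply: (centerC yG (fZ x xG)).
pose phim := morphm phiM.
have phimE : forall x, morphm_morphism phiM x = x * f x by [].
have injphi : 'injm phim.
  apply/subsetP=> x /morphpreP [xG /set1P phix1].
  have phix : x * f x = 1 := phix1.
  have ex : x = (f x)^-1 by rewrite -[LHS](mulgK (f x)) phix mul1g.
  have xM : x \in M by rewrite ex groupV (subsetP sZM) // fZ.
  by apply/set1P; rewrite -[RHS]phix f1 ?mulg1.
have imphi : phim @* G = G.
  apply/eqP; rewrite eqEcard card_injm // leqnn andbT.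
  apply/subsetP=> _ /morphimP [x _ xG ->]; rewrite phimE groupM //.
  exact: (subsetP (center_sub G)) (fZ x xG).
exists (aut injphi imphi); split.
- rewrite /AutcZ in_set; apply/andP; split; first rewrite /Autc in_set Aut_aut /=.
    apply/forall_inP=> x xG; rewrite autE // phimE mulKg; exact: fZ.
  apply/forall_inP=> z zZ; rewrite autE ?(subsetP (center_sub G)) // phimE.
  by rewrite f1 ?mulg1 // (subsetP sZM).
- by move=> m mM; rewrite autE ?(subsetP sMG) // phimE f1 ?mulg1.
- rewrite autE // phimE ft -{2}[t]mulg1 (can_eq (mulKg t)).
  by rewrite -order_gt1 oz0 prime_gt1.
Qed.
Lemma small_gen (T : finGroupType) (H : {group T}) p a :
  prime p -> p.-group H -> #|H| <= p -> a \in H -> a != 1 -> H \subset <[a]>.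
Proof.
move=> pr pH leHp aH na.
have oa : 1 < #[a] by rewrite order_gt1.
have da := order_dvdG aH.
have cH := card_pgroup pH.
have Hp : #|H| = p.
  move: leHp da; rewrite cH; case: (logn p #|H|) => [|[|k]].
  - by rewrite expn0 => _; rewrite dvdn1 => /eqP o1; rewrite o1 in oa.
  - by rewrite expn1.
  - move=> le _; have : p ^ 1 < p ^ k.+2 by rewrite ltn_exp2l ?(prime_gt1 pr).
    rewrite expn1; lia.
have oap : #[a] = p.
  by apply/(prime_nt_dvdP pr); [rewrite neq_ltn oa orbT | rewrite -Hp].
have: <[a]> \subset H by rewrite cycle_subG.
move=> sAH; suff -> : H :=: <[a]> by [].
by apply/eqP; rewrite eq_sym eqEcard sAH /= -orderE oap Hp leqnn.
Qed.

Lemma Inn_center_small (p : nat) (gT : finGroupType) (G : {group gT}) :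
  prime p -> p.-group G -> 2 <= logn p #|'Z(G)| ->
  3 <= nil_class G -> logn p #|G| = nil_class G + 2 ->
  #|'Z(Inn G)| <= p.
Proof.
move=> pr pG z2 c3 nG.
have nilG := pgroup_nil pG.
set Q := G / 'Z(G).
have isoQ : Q \isog Inn G.
  rewrite /Q /Inn.
  have := first_isog_loc (conj_aut_morphism G) (normG G).
  by rewrite ker_conj_aut.
have cQ : nil_class Q = (nil_class G).-1 by rewrite nil_class_quotient_center.
have pQ : p.-group Q by exact: quotient_pgroup.
have nilQ : nilpotent Q by exact: quotient_nil.
have lQ : logn p #|Q| = logn p #|G| - logn p #|'Z(G)|.
  rewrite -(Lagrange (center_sub G)) lognM ?cardG_gt0 // card_quotient ?normal_norm ?center_normal //.
  by rewrite addKn.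
set R := Q / 'Z(Q).
have cR : nil_class R = (nil_class Q).-1 by rewrite nil_class_quotient_center.
have pR : p.-group R by exact: quotient_pgroup.
have lR : logn p #|R| = logn p #|Q| - logn p #|'Z(Q)|.
  rewrite -(Lagrange (center_sub Q)) lognM ?cardG_gt0 // card_quotient ?normal_norm ?center_normal //.
  by rewrite addKn.
have bR := nil_class_pgroup pR.
have m2 : 2 <= logn p #|R|.
  rewrite leqNgt; apply/negP => m1.
  have cycR : cyclic R.
    move: m1; rewrite ltnS leq_eqVlt ltnS leqn0 => /orP [/eqP m1 | /eqP m0].
      by apply: prime_cyclic; rewrite (card_pgroup pR) m1 expn1.
    have R1 : #|R| = 1%N by rewrite (card_pgroup pR) m0.
    by rewrite /R (card1_trivg R1) cyclic1.
  have := cyclic_center_factor_abelian cycR.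
  by rewrite -nil_class1 cQ; lia.
have w1 : logn p #|'Z(Q)| <= 1.
  move: bR; rewrite cR cQ lR lQ nG; move: m2; rewrite lR lQ nG.
  rewrite /maxn; case: ifP => _; lia.
have : 'Z(Q) \isog 'Z(Inn G) by apply: isog_center.
move/card_isog <-.
rewrite (card_pgroup (pgroupS (center_sub Q) pQ)).
have : p ^ logn p #|'Z(Q)| <= p ^ 1 by rewrite leq_pexp2l ?(prime_gt0 pr).
by rewrite expn1.
Qed.

Theorem lemma2p2 (p : nat) (gT : finGroupType) (G : {group gT}) :
  prime p -> p.-group G ->
  ~~ ('Z(G) \subset G^`(1)) ->
  3 <= nil_class G ->
  coclass p G = 2 ->
  ~ ('Z(Inn G) = AutcZ G /\ AutcZ G \proper Autc G).
Proof.
move=> pr pG nZG' c3 cc [eqZ _].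
have nilG := pgroup_nil pG.
have nG : logn p #|G| = nil_class G + 2.
  by rewrite /coclass in cc; rewrite -cc subnKC // ltnW // -subn_gt0 cc.
have nab : ~~ abelian G by rewrite -nil_class1 -ltnNge; lia.
have pZ : p.-group 'Z(G) := pgroupS (center_sub G) pG.
have z2 : 2 <= logn p #|'Z(G)|.
  have nD : G^`(1) :&: 'Z(G) != 1.
    apply: meet_center_nil => //; first exact: der_normal.
    by apply: contra nab => /eqP; move/derG1P.
  have pD : p.-group (G^`(1) :&: 'Z(G)) := pgroupS (subsetIr _ _) pZ.
  have prD : G^`(1) :&: 'Z(G) \proper 'Z(G).
    rewrite properEneq subsetIr andbT; apply: contra nZG' => /eqP <-.
    exact: subsetIl.
  have l1 : 0 < logn p #|G^`(1) :&: 'Z(G)|.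
    move: nD; rewrite -cardG_gt1 (card_pgroup pD).
    by case: (logn _ _) => [|k] //; rewrite pfactorK.
  have h := proper_card prD.
  rewrite (card_pgroup pD) (card_pgroup pZ) (ltn_exp2l _ _ (prime_gt1 pr)) in h; move: h l1; rewrite /=; move=> h1 h2; exact: leq_ltn_trans h2 h1.
have smallZ := Inn_center_small pr pG z2 c3 nG.
have pInn : p.-group (Inn G) by exact: morphim_pgroup.
have ntInn : Inn G != 1.
  apply: contra nab => /eqP I1; apply/subsetP => g gG.
  have gN : g \in 'N(G) := subsetP (normG G) g gG.
  have : conj_aut G g \in Inn G := mem_morphim (conj_aut_morphism G) gN gG.
  rewrite I1 => /set1P h; rewrite -ker_conj_aut; exact/kerP.
have ntZ : 'Z(Inn G) != 1.
  apply: contra ntInn => /eqP Z1; apply/eqP.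
  exact: (trivg_center_pgroup pInn Z1).
have prZ : 'Z(G) \proper G.
  rewrite properEneq center_sub andbT; apply: contra nab => /eqP <-.
  exact: center_abelian.
have [M1 maxM1 sZM1] := @maxgroup_exists gT (fun H : {group gT} => H \proper G) [group of 'Z(G)] prZ.
have [sM1G [t tG tM1]] := properP (maxgroupp maxM1).
have prH : (<[t]> <*> 'Z(G))%G \proper G.
  rewrite properEneq join_subG cycle_subG tG center_sub !andbT.
  apply: contra nab => /eqP /= <-.
  rewrite abelianY; apply/and3P; split; [exact: cycle_abelian | exact: center_abelian |].
  have stG : <[t]> \subset G by rewrite cycle_subG.
  exact: subset_trans (subsetIr G 'C(G)) (centS stG).
have [M2 maxM2 sHM2] := @maxgroup_exists gT (fun H : {group gT} => H \proper G) _ prH.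
have tM2 : t \in M2.
  by apply: (subsetP sHM2); apply: (subsetP (joing_subl _ _)); exact: cycle_id.
have sZM2 : 'Z(G) \subset M2 := subset_trans (joing_subr _ _) sHM2.
have [z0 z0Z oz0] : {z0 | z0 \in 'Z(G) & #[z0] = p}.
  apply: Cauchy => //; rewrite (card_pgroup pZ).
  have h : 0 < logn p #|'Z(G)| by apply: leq_trans z2.
  by rewrite -(subnKC h) add1n expnS dvdn_mulr.
have getA : forall M : {group gT}, maximal M G -> 'Z(G) \subset M ->
    exists2 a : {perm gT}, a \in 'Z(Inn G) & 'Z(Inn G) \subset <[a]> /\ {in M, forall m, a m = m}.
  move=> M maxM sZM.
  have [_ [u uG uM]] := properP (maxgroupp maxM).
  have [a [aZ fixM nat]] := build_aut pr (p_maximal_normal pG maxM)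
    (p_maximal_index pG maxM) sZM z0Z oz0 uG uM.
  rewrite -eqZ in aZ; exists a => //; split => //.
  apply: small_gen pr (pgroupS (center_sub _) pInn) smallZ aZ _.
  by apply: contra nat => /eqP ->; rewrite perm1.
have [a1 a1Z [sZa1 fix1]] := getA M1 maxM1 sZM1.
have [a2 a2Z [sZa2 fix2]] := getA M2 maxM2 sZM2.
have [b bZ nb] := trivgPn _ ntZ.
have fixb : forall (a : {perm gT}) (M : {set gT}), 'Z(Inn G) \subset <[a]> ->
    {in M, forall m, a m = m} -> {in M, forall m, b m = m}.
  move=> a M sZa fixa m mM; have /cycleP [k ->] := subsetP sZa b bZ.
  by apply: permX_fix; apply: fixa.
have /morphimP [g gN gG bg] : b \in Inn G := subsetP (center_sub _) b bZ.
have cM : forall M : {group gT}, M \subset G -> {in M, forall m, b m = m} ->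
    M \subset 'C_G[g].
  move=> M sMG fixM; apply/subsetP => m mM.
  have mG := subsetP sMG m mM.
  rewrite inE mG /=; apply/cent1P; apply/commgP; apply/conjg_fixP.
  by rewrite -(conj_autE gG mG) -bg fixM.
have sM1C := cM M1 (proper_sub (maxgroupp maxM1)) (fixb _ _ sZa1 fix1).
have sM2C := cM M2 (proper_sub (maxgroupp maxM2)) (fixb _ _ sZa2 fix2).
have CG : 'C_G[g] = G.
  apply/eqP; rewrite eqEsubset subsetIl /=.
  case: (boolP ('C_G[g] \proper G)) => [prC | ].
    have [_ mx] := maxgroupP maxM1.
    have e := mx [group of 'C_G[g]] prC sM1C.
    by move: tM1; rewrite -e (subsetP sM2C) // tM2.
  by rewrite properEneq subsetIl andbT negbK => /eqP ->.
have gC : g \in 'C(G) by rewrite -sub_cent1 -CG subsetIr.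
move: nb; rewrite bg; apply/negP; rewrite negbK; apply/eqP.
by apply: mker; rewrite ker_conj_aut.
Qed.
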